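(* Let $U,V$ be disjoint finite sets, ${\bf s}\in\mathbb N^U$, ${\bf t}\in\mathbb N^V$, ${\bf d}=({\bf s},{\bf t})$, and let $\mathcal B({\bf s},{\bf t})$ be a uniformly random bipartite graph on $U\cup V$ with degree sequence ${\bf d}$. Let $H_1,H_2$ be two edge-disjoint bipartite graphs on $U\cup V$ with ${\bf d}^{H_1}\le{\bf d}$ componentwise, and let $uv\in(U\times V)\setminus(H_1\cup H_2)$. Define \[\xi=\frac{J({\bf d})+\Delta({\bf d})(1+\Delta(H_2))+(d_u-d_u^{H_1})(d_v-d_v^{H_1})}{M-e(H_1)}+\frac{e(H_2)\Delta({\bf s})\Delta({\bf t})}{(M-e(H_1))^2}.\] If $\xi=o(1)$, then \[\mathbb P\big(uv\in\mathcal B({\bf s},{\bf t})\,\big|\,H_1\subseteq\mathcal B({\bf s},{\bf t}),\ H_2\cap\mathcal B({\bf s},{\bf t})=\emptyset\big)=\frac{(d_u-d_u^{H_1})(d_v-d_v^{H_1})}{M-e(H_1)}\big(1+O(\xi)\big).\]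
   Context: $d_w$ denotes the prescribed degree of vertex $w$ (so $d_w=s_w$ for $w\in U$, $d_w=t_w$ for $w\in V$), ${\bf d}^{H}$ and $d^{H}_w$ denote the degree sequence of $H$ and the degree of $w$ in $H$, $e(H)$ and $\Delta(H)$ the number of edges and maximum degree of $H$, and $\Delta(\cdot)$ of a sequence its maximum entry. With entries ordered decreasingly, $s_1\ge s_2\ge\cdots$ and $t_1\ge t_2\ge\cdots$, $M=M({\bf d})=\sum_{u\in U}s_u=\sum_{v\in V}t_v$ and $J({\bf d})=\sum_{i=1}^{s_1}t_i+\sum_{j=1}^{t_1}s_j$. *)

(* Defs.v *)
From HB Require Import structures.
From mathcomp Require Import all_boot all_order all_algebra.
From mathcomp Require Import reals.
Set Implicit Arguments. Unset Strict Implicit. Unset Printing Implicit Defensive.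
Import Order.TTheory GRing.Theory Num.Theory.

Section Bip.
Variables U V : finType.

Definition degU (G : {set U * V}) (u : U) : nat := #|[set v : V | (u, v) \in G]|.
Definition degV (G : {set U * V}) (v : V) : nat := #|[set u : U | (u, v) \in G]|.

Definition realizes (s : U -> nat) (t : V -> nat) (G : {set U * V}) : bool :=
  [forall u, degU G u == s u] && [forall v, degV G v == t v].

Definition maxf (T : finType) (f : T -> nat) : nat := \max_(x : T) f x.

Definition Delta_d (s : U -> nat) (t : V -> nat) : nat := maxn (maxf s) (maxf t).

Definition Delta_H (G : {set U * V}) : nat :=
  maxn (maxf (degU G)) (maxf (degV G)).

Definition Msum (s : U -> nat) : nat := \sum_(u : U) s u.

Definition sorted_desc (T : finType) (f : T -> nat) : seq nat :=
  sort geq [seq f x | x <- enum T].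

(* J(d) = sum_{i=1}^{s_1} t_i + sum_{j=1}^{t_1} s_j *)
Definition Jd (s : U -> nat) (t : V -> nat) : nat :=
  sumn (take (maxf s) (sorted_desc t)) + sumn (take (maxf t) (sorted_desc s)).

Definition cond_space (s : U -> nat) (t : V -> nat) (H1 H2 : {set U * V}) :
  {set {set U * V}} :=
  [set G : {set U * V} | [&& realizes s t G, H1 \subset G & H2 :&: G == set0]].

Variable R : realType.

(* P(uv ∈ B(s,t) | H1 ⊆ B(s,t), H2 ∩ B(s,t) = ∅) for the uniform measure *)
Definition cond_prob (s : U -> nat) (t : V -> nat) (H1 H2 : {set U * V})
  (u : U) (v : V) : R :=
  (#|[set G in cond_space s t H1 H2 | (u, v) \in G]|%:R
     / #|cond_space s t H1 H2|%:R)%R.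

Definition xi (s : U -> nat) (t : V -> nat) (H1 H2 : {set U * V})
  (u : U) (v : V) : R :=
  ((Jd s t + Delta_d s t * (1 + Delta_H H2)
     + (s u - degU H1 u) * (t v - degV H1 v))%:R / (Msum s - #|H1|)%:R
   + (#|H2| * maxf s * maxf t)%:R / ((Msum s - #|H1|) ^ 2)%:R)%R.

Definition main_term (s : U -> nat) (t : V -> nat) (H1 : {set U * V})
  (u : U) (v : V) : R :=
  (((s u - degU H1 u) * (t v - degV H1 v))%:R / (Msum s - #|H1|)%:R)%R.

End Bip.

(* Main.v *)
Require Import Defs.
From HB Require Import structures.
From mathcomp Require Import all_boot all_order all_algebra.
From mathcomp Require Import reals.
From mathcomp Require Import zify ring lra.
Set Implicit Arguments. Unset Strict Implicit. Unset Printing Implicit Defensive.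
Import Order.TTheory GRing.Theory Num.Theory.

Lemma sumn_take_step (a : nat) (l : seq nat) k :
  all (fun z => z <= a) l -> sumn (take k.+1 l) <= a + sumn (take k l).
Proof.
elim: l k => [|z l IH] k //= /andP[za al].
case: k => [|k] /=; first by rewrite take0 /=; lia.
have := IH k al; lia.
Qed.

Lemma sumn_take_sorted (l : seq nat) : sorted geq l ->
  forall w r, perm_eq (w ++ r) l -> sumn w <= sumn (take (size w) l).
Proof.
elim: l => [|a l IH] Hs w r Hp.
  by move: (perm_size Hp); rewrite size_cat /=; case: w {Hp}.
have Hs' : sorted geq l by apply: (path_sorted Hs).
have Hall : all (fun z => z <= a) l.
  have := order_path_min (fun _ _ _ h1 h2 => leq_trans h2 h1) Hs.
  by apply: sub_all => z.
case Haw: (a \in w).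
  have Hpw := perm_to_rem Haw.
  have Hp2 : perm_eq (rem a w ++ r) l.
    rewrite -(perm_cons a); apply: perm_trans _ Hp.
    by rewrite -cat_cons perm_cat2r perm_sym.
  rewrite (perm_sumn Hpw) (perm_size Hpw) /=.
  by rewrite leq_add2l; apply: IH Hs' _ _ Hp2.
have Har : a \in r.
  have : a \in w ++ r by rewrite (perm_mem Hp) mem_head.
  by rewrite mem_cat Haw.
have Hpr := perm_to_rem Har.
have Hp2 : perm_eq (w ++ rem a r) l.
  rewrite -(perm_cons a).
  apply: (perm_trans _ Hp). rewrite perm_sym.
  apply: (@perm_trans _ (w ++ a :: rem a r)); first by rewrite perm_cat2l.
  by rewrite -cat1s perm_catCA.
have H1 := IH Hs' _ _ Hp2.
move: H1; case E: (size w) => [|k] H1.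
  by move/eqP: E; rewrite size_eq0 => /eqP ->.
exact: (leq_trans H1 (sumn_take_step k Hall)).
Qed.

Lemma sum_le_Jpart (T : finType) (f : T -> nat) (S : {set T}) k :
  #|S| <= k -> \sum_(x in S) f x <= sumn (take k (sorted_desc f)).
Proof.
move=> Hk.
have Hsub : subseq (map f (enum S)) (map f (enum T)).
  apply: map_subseq; rewrite /enum_mem.
  apply: subseq_trans (filter_subseq _ _) _.
  by rewrite (@eq_filter _ _ predT) ?filter_predT.
have [r Hr] := perm_to_subseq Hsub.
have Hl : perm_eq (map f (enum S) ++ r) (sorted_desc f).
  rewrite perm_sym /sorted_desc; apply: (perm_trans _ Hr). by rewrite perm_sort.
have Hs : sorted geq (sorted_desc f).
  by apply: sort_sorted => x y; apply: leq_total.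
have := sumn_take_sorted Hs Hl.
rewrite size_map -cardE -big_enum sumnE big_map => H.
apply: (leq_trans H).
rewrite -(subnKC Hk) takeD sumn_cat; exact: leq_addr.
Qed.


Section Gen.
Variables (U V : finType).
Implicit Types (X G R Ad : {set U * V}).

Lemma sum_pair (F : U * V -> nat) : \sum_e F e = \sum_x \sum_y F (x, y).
Proof. by rewrite pair_big /=; apply: eq_big => // [[x y]]. Qed.

Lemma sum_in (T : finType) (A : {set T}) (F : T -> nat) :
  \sum_(e in A) F e = \sum_e (e \in A) * F e.
Proof. by rewrite big_mkcond; apply: eq_bigr => e _; case: (e \in A); rewrite ?mul1n. Qed.

Lemma degU_sum X x : degU X x = \sum_y ((x, y) \in X).
Proof.
rewrite /degU -sum1_card big_mkcond; apply: eq_bigr => y _; rewrite inE.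
by case: (_ \in X).
Qed.

Lemma degV_sum X y : degV X y = \sum_x ((x, y) \in X).
Proof.
rewrite /degV -sum1_card big_mkcond; apply: eq_bigr => x _; rewrite inE.
by case: (_ \in X).
Qed.

Lemma rowsum X (phi : U -> nat) :
  \sum_(e in X) phi e.1 = \sum_x degU X x * phi x.
Proof.
rewrite sum_in sum_pair; apply: eq_bigr => x _.
by rewrite degU_sum big_distrl.
Qed.

Lemma colsum X (phi : V -> nat) :
  \sum_(e in X) phi e.2 = \sum_y degV X y * phi y.
Proof.
rewrite sum_in sum_pair exchange_big; apply: eq_bigr => y _.
by rewrite degV_sum big_distrl.
Qed.

Lemma degU_row X w : degU X w = \sum_(e in X) (e.1 == w : nat).
Proof.
rewrite (rowsum X (fun x => (x == w : nat))) (bigD1 w) //= eqxx muln1 big1 ?addn0 // => x /negbTE ->.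
by rewrite muln0.
Qed.

Lemma degV_col X w : degV X w = \sum_(e in X) (e.2 == w : nat).
Proof.
rewrite (colsum X (fun x => (x == w : nat))) (bigD1 w) //= eqxx muln1 big1 ?addn0 // => x /negbTE ->.
by rewrite muln0.
Qed.

Lemma card_rows X : #|X| = \sum_x degU X x.
Proof.
rewrite -sum1_card (rowsum X (fun _ => 1)); apply: eq_bigr => x _; by rewrite muln1.
Qed.

Lemma sum_switch G R Ad (F : U * V -> nat) :
  R \subset G -> (forall e, e \in Ad -> e \notin G) ->
  \sum_(e in G :\: R :|: Ad) F e + \sum_(e in R) F e =
  \sum_(e in G) F e + \sum_(e in Ad) F e.
Proof.
move=> /subsetP sRG dAG.
rewrite !sum_in -!big_split /=; apply: eq_bigr => e _.
rewrite !inE.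
case eR: (e \in R); case eG: (e \in G); case eA: (e \in Ad) => //=;
  rewrite ?mul0n ?mul1n ?add0n ?addn0 //.
- by have := sRG _ eR; rewrite eG.
- by have := sRG _ eR; rewrite eG.
- by have := dAG e eA; rewrite eG.
Qed.

Lemma sum3 (T : finType) (a b c : T) (F : T -> nat) :
  a != b -> a != c -> b != c ->
  \sum_(e in [set a; b; c]) F e = F a + F b + F c.
Proof.
move=> ab ac bc.
rewrite -setUA big_setU1 /=; last by rewrite !inE negb_or ab ac.
rewrite big_setU1 /=; last by rewrite !inE bc.
by rewrite big_set1 addnA.
Qed.

Lemma deg_switch G R Ad :
  R \subset G -> (forall e, e \in Ad -> e \notin G) ->
  (forall w, \sum_(e in R) (e.1 == w : nat) = \sum_(e in Ad) (e.1 == w : nat)) ->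
  (forall w, \sum_(e in R) (e.2 == w : nat) = \sum_(e in Ad) (e.2 == w : nat)) ->
  (forall x, degU (G :\: R :|: Ad) x = degU G x) /\
  (forall y, degV (G :\: R :|: Ad) y = degV G y).
Proof.
move=> sRG dAG hr hc; split => w.
  have := sum_switch (fun e => (e.1 == w : nat)) sRG dAG.
  rewrite hr -!degU_row => /eqP; rewrite eqn_add2r => /eqP //.
have := sum_switch (fun e => (e.2 == w : nat)) sRG dAG.
rewrite hc -!degV_col => /eqP; rewrite eqn_add2r => /eqP //.
Qed.

Lemma sub_rem G R Ad :
  R \subset G -> (forall e, e \in Ad -> e \notin G) -> (G :\: R :|: Ad) :\: Ad :|: R = G.
Proof.
move=> /subsetP sRG dAG; apply/setP => e; rewrite !inE.
case eR: (e \in R); case eG: (e \in G); case eA: (e \in Ad) => //=.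
all: first [by have := sRG _ eR; rewrite eG | by have := dAG _ eA; rewrite eG].
Qed.

End Gen.


Lemma has12 (b1 b2 b3 b4 b5 b6 b7 b8 b9 b10 b11 b12 : bool) :
  ~~ has id [:: b1; b2; b3; b4; b5; b6; b7; b8; b9; b10; b11; b12] ->
  b1 = false /\ b2 = false /\ b3 = false /\ b4 = false /\ b5 = false /\
  b6 = false /\ b7 = false /\ b8 = false /\ b9 = false /\ b10 = false /\
  b11 = false /\ b12 = false.
Proof.
rewrite /=; case: b1 => //=; case: b2 => //=; case: b3 => //=; case: b4 => //=;
case: b5 => //=; case: b6 => //=; case: b7 => //=; case: b8 => //=;
case: b9 => //=; case: b10 => //=; case: b11 => //=; case: b12 => //=.
Qed.

Lemma has10 (b1 b2 b3 b4 b5 b6 b7 b8 b9 b10 : bool) :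
  ~~ has id [:: b1; b2; b3; b4; b5; b6; b7; b8; b9; b10] ->
  b1 = false /\ b2 = false /\ b3 = false /\ b4 = false /\ b5 = false /\
  b6 = false /\ b7 = false /\ b8 = false /\ b9 = false /\ b10 = false.
Proof.
rewrite /=; case: b1 => //=; case: b2 => //=; case: b3 => //=; case: b4 => //=;
case: b5 => //=; case: b6 => //=; case: b7 => //=; case: b8 => //=;
case: b9 => //=; case: b10 => //=.
Qed.

Section Switch.
Variables (U V : finType) (s : U -> nat) (t : V -> nat) (H1 H2 : {set U * V}).
Variables (u : U) (v : V).
Hypothesis huv1 : (u, v) \notin H1.
Hypothesis huv2 : (u, v) \notin H2.

Definition Om := cond_space s t H1 H2.
Definition SA := [set G in Om | (u, v) \in G].
Definition SB := [set G in Om | (u, v) \notin G].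

Lemma OmP G : G \in Om ->
  [/\ forall x, degU G x = s x, forall y, degV G y = t y, H1 \subset G &
      forall e, e \in H2 -> e \notin G].
Proof.
rewrite inE => /and3P [/andP [/forallP hu /forallP hv] h1 /eqP h2].
split => // [x|y|e eH2]; first exact/eqP/hu. exact/eqP/hv.
apply/negP => eG; have : e \in H2 :&: G by rewrite inE eH2 eG.
by rewrite h2 inE.
Qed.

Lemma OmI G : (forall x, degU G x = s x) -> (forall y, degV G y = t y) ->
  H1 \subset G -> (forall e, e \in H2 -> e \notin G) -> G \in Om.
Proof.
move=> hu hv h1 h2; rewrite inE h1 /realizes.
apply/and3P; split => //.
  by apply/andP; split; apply/forallP => z; apply/eqP.
apply/eqP/setP => e; rewrite !inE; apply/negP => /andP[e2 eG].
by have := h2 e e2; rewrite eG.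
Qed.

Definition badf (G : {set U * V}) x1 y1 x2 y2 :=
  has id [:: (u, y1) \in G; (u, y1) \in H2; (x2, v) \in G; (x2, v) \in H2;
            (x1, y2) \in G; (x1, y2) \in H2; x2 == u; x1 == u; x2 == x1;
            y1 == v; y2 == v; y1 == y2].
Definition badb (G : {set U * V}) x1 y1 x2 y2 :=
  has id [:: (x1, y1) \in G; (x1, y1) \in H2; (x2, y2) \in G; (x2, y2) \in H2;
            x2 == u; x1 == u; x2 == x1; y1 == v; y2 == v; y1 == y2].
Definition vf (G : {set U * V}) x1 y1 x2 y2 :=
  [&& (x1, y1) \in G, (x1, y1) \notin H1, (x2, y2) \in G, (x2, y2) \notin H1
    & ~~ badf G x1 y1 x2 y2].
Definition vb (G : {set U * V}) x1 y1 x2 y2 :=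
  [&& (u, y1) \in G, (u, y1) \notin H1, (x2, v) \in G, (x2, v) \notin H1,
      (x1, y2) \in G, (x1, y2) \notin H1 & ~~ badb G x1 y1 x2 y2].
Definition Rm (x1 : U) (y1 : V) (x2 : U) (y2 : V) : {set U * V} :=
  [set (u, v); (x1, y1); (x2, y2)].
Definition Ad (x1 : U) (y1 : V) (x2 : U) (y2 : V) : {set U * V} :=
  [set (u, y1); (x2, v); (x1, y2)].

Lemma counts_bal (x1 : U) (y1 : V) (x2 : U) (y2 : V) :
  x2 != u -> x1 != u -> x2 != x1 ->
  (forall w, \sum_(e in Rm x1 y1 x2 y2) (e.1 == w : nat) =
             \sum_(e in Ad x1 y1 x2 y2) (e.1 == w : nat)) /\
  (forall w, \sum_(e in Rm x1 y1 x2 y2) (e.2 == w : nat) =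
             \sum_(e in Ad x1 y1 x2 y2) (e.2 == w : nat)).
Proof.
move=> n2u n1u n21.
have d1 : (u, v) != (x1, y1) by rewrite xpair_eqE negb_and eq_sym n1u.
have d2 : (u, v) != (x2, y2) by rewrite xpair_eqE negb_and eq_sym n2u.
have d3 : (x1, y1) != (x2, y2) by rewrite xpair_eqE negb_and eq_sym n21.
have d4 : (u, y1) != (x2, v) by rewrite xpair_eqE negb_and eq_sym n2u.
have d5 : (u, y1) != (x1, y2) by rewrite xpair_eqE negb_and eq_sym n1u.
have d6 : (x2, v) != (x1, y2) by rewrite xpair_eqE negb_and n21.
split => w; rewrite /Rm /Ad !sum3 //=; [exact: addnAC | by rewrite (addnC (v == w))].
Qed.


Lemma fwd G x1 y1 x2 y2 : G \in SA -> vf G x1 y1 x2 y2 ->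
  let G' := G :\: Rm x1 y1 x2 y2 :|: Ad x1 y1 x2 y2 in
  [/\ G' \in SB, vb G' x1 y1 x2 y2 & G' :\: Ad x1 y1 x2 y2 :|: Rm x1 y1 x2 y2 = G].
Proof.
rewrite inE => /andP [GO uvG] /and5P [e1G e1H e2G e2H /has12].
move=> [f1 [f2 [f3 [f4 [f5 [f6 [f7 [f8 [f9 [f10 [f11 f12]]]]]]]]]]] G'.
have [hu hv h1 h2] := OmP GO.
have f7' : (u == x2) = false by rewrite eq_sym.
have f8' : (u == x1) = false by rewrite eq_sym.
have f9' : (x1 == x2) = false by rewrite eq_sym.
have f10' : (v == y1) = false by rewrite eq_sym.
have f11' : (v == y2) = false by rewrite eq_sym.
have f12' : (y2 == y1) = false by rewrite eq_sym.
have sRG : Rm x1 y1 x2 y2 \subset G.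
  by apply/subsetP => e; rewrite !inE => /orP [/orP [] |] /eqP ->.
have dAG : forall e, e \in Ad x1 y1 x2 y2 -> e \notin G.
  by move=> e; rewrite !inE => /orP [/orP [] |] /eqP ->; rewrite ?f1 ?f3 ?f5.
have [bl1 bl2] := @counts_bal x1 y1 x2 y2 (negbT f7) (negbT f8) (negbT f9).
have [dU dV] := deg_switch sRG dAG bl1 bl2.
have nH1 : forall e, e \in H1 -> e \notin G -> False.
  by move=> e eH eG; move/subsetP: h1 => /(_ e eH); rewrite (negbTE eG).
have G'E : forall e, (e \in G :\: Rm x1 y1 x2 y2 :|: Ad x1 y1 x2 y2) = (e \in Ad x1 y1 x2 y2) || ((e \notin Rm x1 y1 x2 y2) && (e \in G)).
  by move=> e; rewrite /G' !inE orbC.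
split.
- rewrite inE; apply/andP; split.
    apply: OmI => [x|y||e eH2].
    + by rewrite dU hu.
    + by rewrite dV hv.
    + apply/subsetP => e eH; rewrite G'E; apply/orP; right.
      have eG : e \in G by move/subsetP: h1; apply.
      rewrite eG andbT !inE; apply/negP => /orP [/orP [] |] /eqP E; subst e.
      * by move: huv1; rewrite eH.
      * by rewrite eH in e1H.
      * by rewrite eH in e2H.
    + rewrite G'E negb_or (negbTE (h2 e eH2)) andbF andbT.
      rewrite !inE; apply/negP => /orP [/orP [] |] /eqP E; subst e.
      * by rewrite eH2 in f2.
      * by rewrite eH2 in f4.
      * by rewrite eH2 in f6.
  by rewrite G'E negb_or !inE !xpair_eqE !eqxx /= f10' f7' f8' /=.
- rewrite /vb /badb /G' !G'E !inE !xpair_eqE !eqxx /=.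
  rewrite ?f1 ?f2 ?f3 ?f4 ?f5 ?f6 ?f7 ?f8 ?f9 ?f10 ?f11 ?f12 ?f7' ?f8' ?f9' ?f10' ?f11' ?f12' /=.
  have n1 : ((u, y1) \in H1) = false by apply/negP => h; apply: (nH1 _ h); rewrite f1.
  have n2 : ((x2, v) \in H1) = false by apply/negP => h; apply: (nH1 _ h); rewrite f3.
  have n3 : ((x1, y2) \in H1) = false by apply/negP => h; apply: (nH1 _ h); rewrite f5.
  have m1 : ((x1, y1) \in H2) = false by apply/negP => h; have := h2 _ h; rewrite e1G.
  have m2 : ((x2, y2) \in H2) = false by apply/negP => h; have := h2 _ h; rewrite e2G.
  by rewrite n1 n2 n3 m1 m2.
- exact: sub_rem.
Qed.


Lemma bwd G x1 y1 x2 y2 : G \in SB -> vb G x1 y1 x2 y2 ->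
  let G' := G :\: Ad x1 y1 x2 y2 :|: Rm x1 y1 x2 y2 in
  [/\ G' \in SA, vf G' x1 y1 x2 y2 & G' :\: Rm x1 y1 x2 y2 :|: Ad x1 y1 x2 y2 = G].
Proof.
rewrite inE => /andP [GO uvG].
move=> /and5P [e1G e1H e2G e2H /and3P [e3G e3H /has10]].
move=> [g1 [g2 [g3 [g4 [g5 [g6 [g7 [g8 [g9 g10]]]]]]]]] G'.
have [hu hv h1 h2] := OmP GO.
have g5' : (u == x2) = false by rewrite eq_sym.
have g6' : (u == x1) = false by rewrite eq_sym.
have g7' : (x1 == x2) = false by rewrite eq_sym.
have g8' : (v == y1) = false by rewrite eq_sym.
have g9' : (v == y2) = false by rewrite eq_sym.
have g10' : (y2 == y1) = false by rewrite eq_sym.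
have sRG : Ad x1 y1 x2 y2 \subset G.
  by apply/subsetP => e; rewrite !inE => /orP [/orP [] |] /eqP ->.
have dAG : forall e, e \in Rm x1 y1 x2 y2 -> e \notin G.
  by move=> e; rewrite !inE => /orP [/orP [] |] /eqP ->; rewrite ?g1 ?g3.
have [bl1 bl2] := @counts_bal x1 y1 x2 y2 (negbT g5) (negbT g6) (negbT g7).
have bl1' : forall w, \sum_(e in Ad x1 y1 x2 y2) (e.1 == w : nat) =
             \sum_(e in Rm x1 y1 x2 y2) (e.1 == w : nat) by move=> w; rewrite bl1.
have bl2' : forall w, \sum_(e in Ad x1 y1 x2 y2) (e.2 == w : nat) =
             \sum_(e in Rm x1 y1 x2 y2) (e.2 == w : nat) by move=> w; rewrite bl2.
have [dU dV] := deg_switch sRG dAG bl1' bl2'.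
have nH1 : forall e, e \in H1 -> e \notin G -> False.
  by move=> e eH eG; move/subsetP: h1 => /(_ e eH); rewrite (negbTE eG).
have G'E : forall e, (e \in G :\: Ad x1 y1 x2 y2 :|: Rm x1 y1 x2 y2) =
   (e \in Rm x1 y1 x2 y2) || ((e \notin Ad x1 y1 x2 y2) && (e \in G)).
  by move=> e; rewrite !inE orbC.
split.
- rewrite inE; apply/andP; split.
    apply: OmI => [x|y||e eH2].
    + by rewrite dU hu.
    + by rewrite dV hv.
    + apply/subsetP => e eH; rewrite G'E; apply/orP; right.
      have eG : e \in G by move/subsetP: h1; apply.
      rewrite eG andbT !inE; apply/negP => /orP [/orP [] |] /eqP E; subst e.
      * by rewrite eH in e1H.
      * by rewrite eH in e2H.
      * by rewrite eH in e3H.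
    + rewrite G'E negb_or (negbTE (h2 e eH2)) andbF andbT.
      rewrite !inE; apply/negP => /orP [/orP [] |] /eqP E; subst e.
      * by move: huv2; rewrite eH2.
      * by rewrite eH2 in g2.
      * by rewrite eH2 in g4.
  by rewrite G'E !inE !xpair_eqE !eqxx.
- rewrite /vf /badf /G' !G'E !inE !xpair_eqE !eqxx /=.
  rewrite ?g1 ?g2 ?g3 ?g4 ?g5 ?g6 ?g7 ?g8 ?g9 ?g10 ?g5' ?g6' ?g7' ?g8' ?g9' ?g10' /=.
  have n1 : ((x1, y1) \in H1) = false by apply/negP => h; apply: (nH1 _ h); rewrite g1.
  have n2 : ((x2, y2) \in H1) = false by apply/negP => h; apply: (nH1 _ h); rewrite g3.
  have m1 : ((u, y1) \in H2) = false by apply/negP => h; have := h2 _ h; rewrite e1G.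
  have m2 : ((x2, v) \in H2) = false by apply/negP => h; have := h2 _ h; rewrite e2G.
  have m3 : ((x1, y2) \in H2) = false by apply/negP => h; have := h2 _ h; rewrite e3G.
  by rewrite n1 n2 m1 m2 m3.
- exact: sub_rem.
Qed.

Lemma card_switch x1 y1 x2 y2 :
  #|[set G in SA | vf G x1 y1 x2 y2]| = #|[set G in SB | vb G x1 y1 x2 y2]|.
Proof.
apply/eqP; rewrite eqn_leq; apply/andP; split.
  rewrite -(@card_in_imset _ _ (fun G => G :\: Rm x1 y1 x2 y2 :|: Ad x1 y1 x2 y2)).
    apply: subset_leq_card; apply/subsetP => G' /imsetP [G].
    rewrite inE => /andP [GA Gv] ->.
    by have [h1 h2 _] := fwd GA Gv; rewrite inE h1 h2.
  move=> G1 G2 /setIdP [G1A G1v] /setIdP [G2A G2v] E.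
  have [_ _ <-] := fwd G1A G1v; have [_ _ <-] := fwd G2A G2v.
  by rewrite E.
rewrite -(@card_in_imset _ _ (fun G => G :\: Ad x1 y1 x2 y2 :|: Rm x1 y1 x2 y2)).
  apply: subset_leq_card; apply/subsetP => G' /imsetP [G].
  rewrite inE => /andP [GA Gv] ->.
  by have [h1 h2 _] := bwd GA Gv; rewrite inE h1 h2.
move=> G1 G2 /setIdP [G1A G1v] /setIdP [G2A G2v] E.
have [_ _ <-] := bwd G1A G1v; have [_ _ <-] := bwd G2A G2v.
by rewrite E.
Qed.

End Switch.


Lemma le_maxf (T : finType) (f : T -> nat) x : f x <= maxf f.
Proof. by rewrite /maxf; apply: (leq_bigmax x). Qed.

Lemma sum_prod (I J : finType) (f : I -> nat) (g : J -> nat) :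
  \sum_i \sum_j f i * g j = (\sum_i f i) * (\sum_j g j).
Proof. by rewrite big_distrl; apply: eq_bigr => i _; rewrite big_distrr. Qed.

Lemma card_sumb (T : finType) (A : {set T}) : #|A| = \sum_e (e \in A : nat).
Proof. by rewrite -sum1_card sum_in; apply: eq_bigr => e _; rewrite muln1. Qed.

Lemma has_sum (l : seq bool) : 1 <= ~~ has id l + sumn (map nat_of_bool l).
Proof. elim: l => [|b l IH] //=; case: b => //=; lia. Qed.

Section Count.
Variables (U V : finType) (s : U -> nat) (t : V -> nat) (H1 H2 : {set U * V}).
Variables (u : U) (v : V).

Let Ds := maxf s.
Let Dt := maxf t.
Let DH := Delta_H H2.
Let J1 := sumn (take (maxf s) (sorted_desc t)).
Let J2 := sumn (take (maxf t) (sorted_desc s)).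

Lemma rowJ (G : {set U * V}) x : (forall x, degU G x = s x) ->
  \sum_y t y * ((x, y) \in G) <= J1.
Proof.
move=> hu.
have -> : \sum_y t y * ((x, y) \in G) = \sum_(y in [set y | (x, y) \in G]) t y.
  by rewrite sum_in; apply: eq_bigr => y _; rewrite inE mulnC.
apply: sum_le_Jpart; rewrite -/(degU G x) hu; exact: le_maxf.
Qed.

Lemma colJ (G : {set U * V}) y : (forall y, degV G y = t y) ->
  \sum_x s x * ((x, y) \in G) <= J2.
Proof.
move=> hv.
have -> : \sum_x s x * ((x, y) \in G) = \sum_(x in [set x | (x, y) \in G]) s x.
  by rewrite sum_in; apply: eq_bigr => x _; rewrite inE mulnC.
apply: sum_le_Jpart; rewrite -/(degV G y) hv; exact: le_maxf.
Qed.

Lemma rowH2 x : \sum_y t y * ((x, y) \in H2) <= Dt * DH.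
Proof.
apply: (@leq_trans (\sum_y Dt * ((x, y) \in H2))).
  by apply: leq_sum => y _; apply: leq_mul => //; exact: le_maxf.
rewrite -big_distrr -degU_sum; apply: leq_mul => //.
apply: leq_trans (leq_maxl _ _); exact: le_maxf.
Qed.

Lemma colH2 y : \sum_x s x * ((x, y) \in H2) <= Ds * DH.
Proof.
apply: (@leq_trans (\sum_x Ds * ((x, y) \in H2))).
  by apply: leq_sum => x _; apply: leq_mul => //; exact: le_maxf.
rewrite -big_distrr -degV_sum; apply: leq_mul => //.
apply: leq_trans (leq_maxr _ _); exact: le_maxf.
Qed.

Lemma allH2 : \sum_(e in H2) s e.1 * t e.2 <= #|H2| * Ds * Dt.
Proof.
rewrite -mulnA card_sumb big_distrl sum_in /=; apply: leq_sum => e _.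
case: (e \in H2); rewrite ?mul0n ?mul1n //.
by apply: leq_mul; exact: le_maxf.
Qed.

End Count.


Lemma nat_group (k n1 n2 n3 n4 n5 n6 n7 n8 n9 n10 n11 n12 : nat) :
  1 <= k + (n1 + (n2 + (n3 + (n4 + (n5 + (n6 + (n7 + (n8 + (n9 + (n10 + (n11 + (n12 + 0)))))))))))) ->
  1 <= k + (n1 + n2 + n8 + n10) + (n3 + n4 + n5 + n7 + n9 + n11 + n12) + n6.
Proof. lia. Qed.

Section Fwd.
Variables (U V : finType) (s : U -> nat) (t : V -> nat) (H1 H2 : {set U * V}).
Variables (u : U) (v : V).

Definition Pf (G : {set U * V}) (x1 : U) (y1 : V) : nat :=
  ((u, y1) \in G) + ((u, y1) \in H2) + (x1 == u) + (y1 == v).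
Definition Qf (G : {set U * V}) (x1 : U) (y1 : V) (x2 : U) (y2 : V) : nat :=
  ((x2, v) \in G) + ((x2, v) \in H2) + ((x1, y2) \in G) + (x2 == u) +
  (x2 == x1) + (y2 == v) + (y1 == y2).

Lemma F_pt (G : {set U * V}) x1 y1 x2 y2 :
  ((x1, y1) \in G :\: H1) * ((x2, y2) \in G :\: H1) <=
  vf H1 H2 u v G x1 y1 x2 y2
  + ((x1, y1) \in G) * ((x2, y2) \in G :\: H1) * Pf G x1 y1
  + ((x1, y1) \in G :\: H1) * ((x2, y2) \in G) * Qf G x1 y1 x2 y2
  + ((x1, y1) \in G) * ((x2, y2) \in G) * ((x1, y2) \in H2).
Proof.
rewrite /vf /badf /Pf /Qf !inE.
case: ((x1, y1) \in H1); case: ((x1, y1) \in G); case: ((x2, y2) \in H1);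
  case: ((x2, y2) \in G); rewrite /= ?mul0n ?muln0 ?mul1n //.
by apply: nat_group; apply: (has_sum [:: _; _; _; _; _; _; _; _; _; _; _; _]).
Qed.


Let Ds := maxf s.
Let Dt := maxf t.
Let DH := Delta_H H2.
Let J1 := sumn (take (maxf s) (sorted_desc t)).
Let J2 := sumn (take (maxf t) (sorted_desc s)).

Definition Nf (G : {set U * V}) :=
  \sum_(e1 : U * V) \sum_(e2 : U * V) (vf H1 H2 u v G e1.1 e1.2 e2.1 e2.2 : nat).

Section G.
Variable G : {set U * V}.
Hypothesis hu : forall x, degU G x = s x.
Hypothesis hv : forall y, degV G y = t y.

Lemma SP : \sum_e1 (e1 \in G) * Pf G e1.1 e1.2 <= J1 + Dt * DH + Ds + Dt.
Proof.
rewrite -sum_in /Pf !big_split /=.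
rewrite (colsum G (fun y => ((u, y) \in G : nat))) (colsum G (fun y => ((u, y) \in H2 : nat))).
rewrite -degU_row -degV_col hu hv.
under eq_bigr do rewrite hv.
under [X in _ + X + _ + _]eq_bigr do rewrite hv.
repeat apply: leq_add.
- exact: (rowJ t u hu).
- exact: rowH2.
- exact: le_maxf.
- exact: le_maxf.
Qed.

Lemma SQ x1 y1 : \sum_e2 (e2 \in G) * Qf G x1 y1 e2.1 e2.2 <=
  J2 + Ds * DH + J1 + 2 * Ds + 2 * Dt.
Proof.
rewrite -sum_in /Qf !big_split /=.
rewrite (rowsum G (fun x => ((x, v) \in G : nat))) (rowsum G (fun x => ((x, v) \in H2 : nat))).
rewrite (colsum G (fun y => ((x1, y) \in G : nat))).
under [X in X + _ + _ + _ + _ + _ + _]eq_bigr do rewrite hu.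
under [X in _ + X + _ + _ + _ + _ + _]eq_bigr do rewrite hu.
under [X in _ + _ + X + _ + _ + _ + _]eq_bigr do rewrite hv.
under [X in _ + _ + _ + _ + _ + _ + X]eq_bigr do rewrite eq_sym.
rewrite -!degU_row -!degV_col !hu !hv.
have h1 := colJ s v hv. have h2 := colH2 s H2 v. have h3 := rowJ t x1 hu.
have h4 := le_maxf s u. have h5 := le_maxf s x1. have h6 := le_maxf t v.
have h7 := le_maxf t y1.
rewrite -/Ds -/Dt -/DH -/J1 -/J2 in h1 h2 h3 h4 h5 h6 h7 *.
lia.
Qed.

Lemma SD : \sum_(e1 : U * V) \sum_(e2 : U * V)
   ((e1 \in G) * (e2 \in G) * ((e1.1, e2.2) \in H2)) <= #|H2| * Ds * Dt.
Proof.
apply: leq_trans (allH2 s t H2).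
have -> : \sum_(e1 : U * V) \sum_(e2 : U * V) ((e1 \in G) * (e2 \in G) * ((e1.1, e2.2) \in H2))
   = \sum_(e1 in G) \sum_(e2 in G) ((e1.1, e2.2) \in H2 : nat).
  rewrite sum_in; apply: eq_bigr => e1 _; rewrite sum_in big_distrr; apply: eq_bigr => e2 _.
  by rewrite /= mulnA.
under eq_bigr do rewrite (colsum G (fun y => ((_, y) \in H2 : nat))).
rewrite (rowsum G (fun x => \sum_y degV G y * ((x, y) \in H2))).
rewrite sum_in sum_pair; apply: eq_leq; apply: eq_bigr => x _.
rewrite hu big_distrr; apply: eq_bigr => y _ /=; rewrite hv.
by case: ((x, y) \in H2); rewrite ?muln0 ?muln1 ?mul1n ?mul0n.
Qed.

Lemma F_bound :
  #|G :\: H1| ^ 2 <= Nf G + #|G :\: H1| * (J1 + Dt * DH + Ds + Dt)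
    + #|G :\: H1| * (J2 + Ds * DH + J1 + 2 * Ds + 2 * Dt) + #|H2| * Ds * Dt.
Proof.
set XX := G :\: H1.
have pt : forall e1 e2 : U * V, (e1 \in XX) * (e2 \in XX) <=
  vf H1 H2 u v G e1.1 e1.2 e2.1 e2.2
  + (e1 \in G) * (e2 \in XX) * Pf G e1.1 e1.2
  + (e1 \in XX) * (e2 \in G) * Qf G e1.1 e1.2 e2.1 e2.2
  + (e1 \in G) * (e2 \in G) * ((e1.1, e2.2) \in H2).
  by move=> [x1 y1] [x2 y2]; exact: F_pt.
rewrite -mulnn {1 2}(@card_sumb _ XX) -sum_prod.
eapply leq_trans; first by apply: leq_sum => e1 _; apply: leq_sum => e2 _; apply: pt.
under eq_bigr do rewrite !big_split.
rewrite !big_split /=.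
repeat apply: leq_add.
- by [].
- under eq_bigr do under eq_bigr do rewrite mulnAC.
  rewrite sum_prod mulnC -card_sumb; apply: leq_mul => //; exact: SP.
- apply: (@leq_trans (\sum_(e1 : U * V) (e1 \in XX) * (J2 + Ds * DH + J1 + 2 * Ds + 2 * Dt))).
    apply: leq_sum => e1 _.
    under eq_bigr do rewrite -mulnA.
    rewrite -big_distrr /=; apply: leq_mul => //; exact: SQ.
  by rewrite -big_distrl -card_sumb.
- exact: SD.
Qed.

End G.
End Fwd.


Lemma nat_group2 (k n1 n2 n3 n4 n6 n7 n9 n10 : nat) :
  1 <= k + (n1 + (n2 + (n3 + (n4 + (0 + (n6 + (n7 + (0 + (n9 + (n10 + 0)))))))))) ->
  1 <= k + (n1 + n2 + n3 + n4 + n6 + n7 + n9 + n10).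
Proof. lia. Qed.

Lemma reorder (U V : finType) (F : U -> V -> U -> V -> nat) :
  \sum_(e1 : U * V) \sum_(e2 : U * V) F e1.1 e1.2 e2.1 e2.2 =
  \sum_y1 \sum_x2 \sum_x1 \sum_y2 F x1 y1 x2 y2.
Proof.
transitivity (\sum_x1 \sum_y1 \sum_x2 \sum_y2 F x1 y1 x2 y2).
  rewrite sum_pair; apply: eq_bigr => x1 _; apply: eq_bigr => y1 _.
  by rewrite sum_pair.
rewrite exchange_big; apply: eq_bigr => y1 _; by rewrite exchange_big.
Qed.

Section Bwd.
Variables (U V : finType) (s : U -> nat) (t : V -> nat) (H1 H2 : {set U * V}).
Variables (u : U) (v : V).

Let Ds := maxf s.
Let Dt := maxf t.
Let DH := Delta_H H2.
Let J1 := sumn (take (maxf s) (sorted_desc t)).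
Let J2 := sumn (take (maxf t) (sorted_desc s)).

Definition Qb (G : {set U * V}) (x1 : U) (y1 : V) (x2 : U) (y2 : V) : nat :=
  ((x1, y1) \in G) + ((x1, y1) \in H2) + ((x2, y2) \in G) + ((x2, y2) \in H2) +
  (x1 == u) + (x2 == x1) + (y2 == v) + (y1 == y2).

Definition Nb (G : {set U * V}) :=
  \sum_(e1 : U * V) \sum_(e2 : U * V) (vb H1 H2 u v G e1.1 e1.2 e2.1 e2.2 : nat).

Lemma B_pt (G : {set U * V}) x1 y1 x2 y2 : (u, v) \notin G ->
  ((u, y1) \in G :\: H1) * ((x2, v) \in G :\: H1) * ((x1, y2) \in G :\: H1) <=
  vb H1 H2 u v G x1 y1 x2 y2 +
  ((u, y1) \in G :\: H1) * ((x2, v) \in G :\: H1) * ((x1, y2) \in G) * Qb G x1 y1 x2 y2.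
Proof.
move=> uvG.
rewrite /vb /badb /Qb !inE.
case: ((u, y1) \in H1); case E1: ((u, y1) \in G); case: ((x2, v) \in H1);
  case E2: ((x2, v) \in G); case: ((x1, y2) \in H1); case: ((x1, y2) \in G);
  rewrite /= ?mul0n ?muln0 ?mul1n //.
have n5 : (x2 == u) = false.
  by apply/negP => /eqP E; move: uvG; rewrite -E E2.
have n8 : (y1 == v) = false.
  by apply/negP => /eqP E; move: uvG; rewrite -E E1.
apply: nat_group2.
have := has_sum [:: (x1, y1) \in G; (x1, y1) \in H2; (x2, y2) \in G;
  (x2, y2) \in H2; x2 == u; x1 == u; x2 == x1; y1 == v; y2 == v; y1 == y2].
by rewrite n5 n8.
Qed.

Lemma B_up (G : {set U * V}) x1 y1 x2 y2 :
  vb H1 H2 u v G x1 y1 x2 y2 <=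
  ((u, y1) \in G :\: H1) * ((x2, v) \in G :\: H1) * ((x1, y2) \in G :\: H1).
Proof.
rewrite /vb !inE.
case: ((u, y1) \in H1); case: ((u, y1) \in G); case: ((x2, v) \in H1);
  case: ((x2, v) \in G); case: ((x1, y2) \in H1); case: ((x1, y2) \in G);
  by rewrite /= ?andbF ?leq_b1.
Qed.

Lemma F_up (G : {set U * V}) x1 y1 x2 y2 :
  vf H1 H2 u v G x1 y1 x2 y2 <= ((x1, y1) \in G :\: H1) * ((x2, y2) \in G :\: H1).
Proof.
rewrite /vf !inE.
case: ((x1, y1) \in H1); case: ((x1, y1) \in G); case: ((x2, y2) \in H1);
  case: ((x2, y2) \in G); by rewrite /= ?andbF ?leq_b1.
Qed.


Section G.
Variable G : {set U * V}.
Hypothesis hu : forall x, degU G x = s x.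
Hypothesis hv : forall y, degV G y = t y.

Lemma SQb y1 x2 : \sum_x1 \sum_y2 ((x1, y2) \in G) * Qb G x1 y1 x2 y2 <=
  J2 + Ds * DH + J1 + Dt * DH + 2 * Ds + 2 * Dt.
Proof.
rewrite -(sum_pair (fun e => ((e.1, e.2) \in G) * Qb G e.1 y1 x2 e.2)).
have -> : \sum_e ((e.1, e.2) \in G) * Qb G e.1 y1 x2 e.2 =
          \sum_(e in G) Qb G e.1 y1 x2 e.2.
  by rewrite sum_in; apply: eq_bigr => [[x y]] _.
rewrite /Qb !big_split /=.
rewrite (rowsum G (fun x => ((x, y1) \in G : nat))) (rowsum G (fun x => ((x, y1) \in H2 : nat))).
rewrite (colsum G (fun y => ((x2, y) \in G : nat))) (colsum G (fun y => ((x2, y) \in H2 : nat))).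
under [X in X + _ + _ + _ + _ + _ + _ + _]eq_bigr do rewrite hu.
under [X in _ + X + _ + _ + _ + _ + _ + _]eq_bigr do rewrite hu.
under [X in _ + _ + X + _ + _ + _ + _ + _]eq_bigr do rewrite hv.
under [X in _ + _ + _ + X + _ + _ + _ + _]eq_bigr do rewrite hv.
under [X in _ + _ + _ + _ + _ + X + _ + _]eq_bigr do rewrite eq_sym.
under [X in _ + _ + _ + _ + _ + _ + _ + X]eq_bigr do rewrite eq_sym.
rewrite -!degU_row -!degV_col !hu !hv.
have h1 := colJ s y1 hv. have h2 := colH2 s H2 y1. have h3 := rowJ t x2 hu.
have h3' := rowH2 t H2 x2.
have h4 := le_maxf s u. have h5 := le_maxf s x2. have h6 := le_maxf t v.
have h7 := le_maxf t y1.
rewrite -/Ds -/Dt -/DH -/J1 -/J2 in h1 h2 h3 h3' h4 h5 h6 h7 *.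
lia.
Qed.

Lemma B_bound : (u, v) \notin G ->
  degU (G :\: H1) u * degV (G :\: H1) v * #|G :\: H1| <=
  Nb G + degU (G :\: H1) u * degV (G :\: H1) v *
         (J2 + Ds * DH + J1 + Dt * DH + 2 * Ds + 2 * Dt).
Proof.
move=> uvG.
set XX := G :\: H1.
set K := J2 + Ds * DH + J1 + Dt * DH + 2 * Ds + 2 * Dt.
have main : degU XX u * degV XX v * #|XX| =
  \sum_y1 \sum_x2 \sum_x1 \sum_y2
    (((u, y1) \in XX) * ((x2, v) \in XX) * ((x1, y2) \in XX)).
  rewrite degU_sum degV_sum card_sumb sum_pair -sum_prod big_distrl.
  apply: eq_bigr => y1 _; rewrite big_distrl; apply: eq_bigr => x2 _.
  rewrite big_distrr; apply: eq_bigr => x1 _; rewrite big_distrr.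
  by apply: eq_bigr => y2 _.
have bad : \sum_y1 \sum_x2 \sum_x1 \sum_y2
    (((u, y1) \in XX) * ((x2, v) \in XX) * ((x1, y2) \in G) * Qb G x1 y1 x2 y2)
    <= degU XX u * degV XX v * K.
  rewrite degU_sum degV_sum -sum_prod big_distrl; apply: leq_sum => y1 _.
  rewrite big_distrl; apply: leq_sum => x2 _.
  under eq_bigr do under eq_bigr do rewrite -mulnA.
  under eq_bigr do rewrite -big_distrr.
  rewrite -big_distrr /=; apply: leq_mul => //; exact: SQb.
rewrite main /Nb (reorder (fun x1 y1 x2 y2 => (vb H1 H2 u v G x1 y1 x2 y2 : nat))).
apply: leq_trans (leq_add (leqnn _) bad).
rewrite -!big_split /=.
apply: leq_sum => y1 _; rewrite -big_split; apply: leq_sum => x2 _.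
rewrite -big_split; apply: leq_sum => x1 _; rewrite -big_split; apply: leq_sum => y2 _.
exact: B_pt.
Qed.

Lemma B_upper :
  Nb G <= degU (G :\: H1) u * degV (G :\: H1) v * #|G :\: H1|.
Proof.
set XX := G :\: H1.
have main : degU XX u * degV XX v * #|XX| =
  \sum_y1 \sum_x2 \sum_x1 \sum_y2
    (((u, y1) \in XX) * ((x2, v) \in XX) * ((x1, y2) \in XX)).
  rewrite degU_sum degV_sum card_sumb sum_pair -sum_prod big_distrl.
  apply: eq_bigr => y1 _; rewrite big_distrl; apply: eq_bigr => x2 _.
  rewrite big_distrr; apply: eq_bigr => x1 _; rewrite big_distrr.
  by apply: eq_bigr => y2 _.
rewrite main /Nb (reorder (fun x1 y1 x2 y2 => (vb H1 H2 u v G x1 y1 x2 y2 : nat))).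
apply: leq_sum => y1 _; apply: leq_sum => x2 _.
apply: leq_sum => x1 _; apply: leq_sum => y2 _.
exact: B_up.
Qed.

Lemma F_upper : Nf H1 H2 u v G <= #|G :\: H1| * #|G :\: H1|.
Proof.
rewrite card_sumb -sum_prod; apply: leq_sum => [[x1 y1]] _.
apply: leq_sum => [[x2 y2]] _; exact: F_up.
Qed.

End G.
End Bwd.


Lemma card_split (T : finType) (A : {set T}) (P : pred T) :
  #|A| = #|[set x in A | P x]| + #|[set x in A | ~~ P x]|.
Proof.
rewrite !card_sumb -big_split; apply: eq_bigr => x _; rewrite !inE.
by case: (x \in A); case: (P x).
Qed.

Lemma card_filter (T : finType) (A : {set T}) (P : pred T) :
  #|[set x in A | P x]| = \sum_(x in A) (P x : nat).
Proof.
rewrite card_sumb sum_in; apply: eq_bigr => x _; rewrite !inE.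
by case: (x \in A); case: (P x).
Qed.

Section RealPart.
Local Open Scope ring_scope.
Lemma final_real (R : realFieldType) (nA nB m ab Ef Kb X Y : R) :
  0 <= nA -> 0 <= nB -> 0 < nA + nB -> 0 < m -> 0 <= ab -> 0 <= Ef -> 0 <= Kb ->
  0 <= X -> 0 <= Y ->
  nA * (m * m) <= nB * (ab * m) + nA * Ef ->
  nB * (ab * m) <= nA * (m * m) + nB * (ab * Kb) ->
  Ef <= 6 * (m * X + Y) -> Kb <= 4 * X -> ab <= X ->
  X / m + Y / (m * m) <= 1 / 12 ->
  `|nA / (nA + nB) - ab / m| <= 12 * (X / m + Y / (m * m)) * (ab / m).
Proof.
move=> hA hB hN hm hab hEf hKb hX hY h1 h2 hE hK habX.
set xi := X / m + Y / (m * m) => hxi.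
have m0 : m != 0 by rewrite gt_eqF.
have N0 : nA + nB != 0 by rewrite gt_eqF.
have xm : xi * (m * m) = X * m + Y by rewrite /xi; field.
have mm : 0 < m * m by apply: mulr_gt0.
have xi0 : 0 <= xi by rewrite /xi; apply: addr_ge0; apply: divr_ge0 => //; exact: ltW.
have Xm : X <= xi * m.
  have : X * m <= xi * m * m by rewrite -mulrA xm; lra.
  by rewrite ler_pM2r.
have EF : Ef <= 6 * xi * (m * m) by rewrite -mulrA xm; lra.
have A1 : nA * m <= nB * ab + 6 * xi * (nA * m).
  have : (nA * m) * m <= (nB * ab + 6 * xi * (nA * m)) * m.
    have : nA * Ef <= nA * (6 * xi * (m * m)) by apply: ler_wpM2l.
    move: h1; rewrite -!mulrA; lra.
  by rewrite ler_pM2r.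
have A2 : nA * m <= 2 * (nB * ab).
  have : 6 * xi * (nA * m) <= 1/2 * (nA * m).
    apply: ler_wpM2r; first by apply: mulr_ge0; lra.
    lra.
  lra.
have B1 : nB * ab <= nA * m + 4 * xi * (nB * ab).
  have : (nB * ab) * m <= (nA * m + 4 * xi * (nB * ab)) * m.
    have : nB * (ab * Kb) <= nB * (ab * (4 * xi * m)).
      apply: ler_wpM2l => //; apply: ler_wpM2l => //; lra.
    move: h2; rewrite -!mulrA; lra.
  by rewrite ler_pM2r.
have C1 : ab * nA <= 2 * xi * (nB * ab).
  have : (ab * nA) * m <= (2 * xi * (nB * ab)) * m.
    have e1 : ab * (nA * m) <= xi * m * (nA * m).
      by apply: ler_wpM2r; [apply: mulr_ge0; lra | lra].
    have e2 : xi * m * (nA * m) <= xi * m * (2 * (nB * ab)).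
      by apply: ler_wpM2l => //; apply: mulr_ge0; lra.
    rewrite -mulrA; apply: (le_trans e1); apply: (le_trans e2); rewrite le_eqVlt; apply/orP; left; apply/eqP; ring.
  by rewrite ler_pM2r.
have target : `|nA * m - ab * (nA + nB)| <= 12 * xi * (ab * (nA + nB)).
  rewrite ler_norml; apply/andP; split.
  - have : 4 * xi * (nB * ab) <= 4 * xi * (ab * (nA + nB)).
      apply: ler_wpM2l; first lra.
      rewrite mulrC; apply: ler_wpM2l => //; lra.
    have : 2 * xi * (nB * ab) <= 2 * xi * (ab * (nA + nB)).
      apply: ler_wpM2l; first lra.
      rewrite mulrC; apply: ler_wpM2l => //; lra.
    have : 0 <= xi * (ab * (nA + nB)) by apply: mulr_ge0 => //; apply: mulr_ge0; lra.
    lra.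
  - have : 12 * xi * (nB * ab) <= 12 * xi * (ab * (nA + nB)).
      apply: ler_wpM2l; first lra.
      rewrite mulrC; apply: ler_wpM2l => //; lra.
    have : 0 <= ab * nA by apply: mulr_ge0.
    have : 6 * xi * (nA * m) <= 6 * xi * (2 * (nB * ab)) by apply: ler_wpM2l; lra.
    lra.
have -> : nA / (nA + nB) - ab / m = (nA * m - ab * (nA + nB)) / ((nA + nB) * m).
  by field; rewrite m0 N0.
rewrite normrM normfV (gtr0_norm (mulr_gt0 hN hm)).
rewrite ler_pdivrMr ?mulr_gt0 //.
apply: (le_trans target); rewrite le_eqVlt; apply/orP; left; apply/eqP; by field.
Qed.

End RealPart.

Section Final.
Variables (U V : finType) (s : U -> nat) (t : V -> nat) (H1 H2 : {set U * V}).
Variables (u : U) (v : V).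
Hypothesis huv1 : (u, v) \notin H1.
Hypothesis huv2 : (u, v) \notin H2.

Let m := Msum s - #|H1|.
Let a := s u - degU H1 u.
Let b := t v - degV H1 v.
Let Ds := maxf s.
Let Dt := maxf t.
Let DH := Delta_H H2.
Let J1 := sumn (take (maxf s) (sorted_desc t)).
Let J2 := sumn (take (maxf t) (sorted_desc s)).
Let KP := J1 + Dt * DH + Ds + Dt.
Let KQ := J2 + Ds * DH + J1 + 2 * Ds + 2 * Dt.
Let Kb := J2 + Ds * DH + J1 + Dt * DH + 2 * Ds + 2 * Dt.
Let Ef := m * KP + m * KQ + #|H2| * Ds * Dt.

Lemma cardX G : G \in Om s t H1 H2 -> #|G :\: H1| = m.
Proof.
move=> /OmP [hu _ h1 _].
rewrite cardsD (setIidPr h1) card_rows /m /Msum.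
by under eq_bigr do rewrite hu.
Qed.

Lemma degXU G w : G \in Om s t H1 H2 -> degU (G :\: H1) w = s w - degU H1 w.
Proof.
move=> /OmP [hu _ /subsetP h1 _].
rewrite -hu !degU_sum.
have -> : \sum_y ((w, y) \in G : nat) =
  \sum_y ((w, y) \in G :\: H1 : nat) + \sum_y ((w, y) \in H1 : nat).
  rewrite -big_split; apply: eq_bigr => y _.
  rewrite !inE; case E: ((w, y) \in H1) => /=; last by rewrite addn0.
  by rewrite (h1 _ E).
by rewrite addnK.
Qed.

Lemma degXV G w : G \in Om s t H1 H2 -> degV (G :\: H1) w = t w - degV H1 w.
Proof.
move=> /OmP [_ hv /subsetP h1 _].
rewrite -hv !degV_sum.
have -> : \sum_x ((x, w) \in G : nat) =
  \sum_x ((x, w) \in G :\: H1 : nat) + \sum_x ((x, w) \in H1 : nat).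
  rewrite -big_split; apply: eq_bigr => x _.
  rewrite !inE; case E: ((x, w) \in H1) => /=; last by rewrite addn0.
  by rewrite (h1 _ E).
by rewrite addnK.
Qed.

Lemma sumNf : \sum_(G in SA s t H1 H2 u v) Nf H1 H2 u v G =
              \sum_(G in SB s t H1 H2 u v) Nb H1 H2 u v G.
Proof.
rewrite /Nf /Nb exchange_big [RHS]exchange_big; apply: eq_bigr => e1 _.
rewrite exchange_big [RHS]exchange_big; apply: eq_bigr => e2 _.
rewrite -!(card_filter _ (fun G => vf H1 H2 u v G e1.1 e1.2 e2.1 e2.2)).
rewrite -!(card_filter _ (fun G => vb H1 H2 u v G e1.1 e1.2 e2.1 e2.2)).
exact: card_switch.
Qed.


Lemma ineqI : #|SA s t H1 H2 u v| * (m * m) <=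
  #|SB s t H1 H2 u v| * (a * b * m) + #|SA s t H1 H2 u v| * Ef.
Proof.
apply: (@leq_trans (\sum_(G in SA s t H1 H2 u v) (Nf H1 H2 u v G + Ef))).
  rewrite -sum_nat_const; apply: leq_sum => G /setIdP [GO _].
  have [hu hv _ _] := OmP GO.
  have := F_bound H1 H2 u v hu hv.
  rewrite (cardX GO) -mulnn /Ef /KP /KQ /Ds /Dt /DH /J1 /J2; lia.
rewrite big_split /= sum_nat_const sumNf leq_add2r.
rewrite -sum_nat_const; apply: leq_sum => G /setIdP [GO _].
have := B_upper H1 H2 u v G.
by rewrite (degXU _ GO) (degXV _ GO) (cardX GO).
Qed.

Lemma ineqII : #|SB s t H1 H2 u v| * (a * b * m) <=
  #|SA s t H1 H2 u v| * (m * m) + #|SB s t H1 H2 u v| * (a * b * Kb).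
Proof.
apply: (@leq_trans (\sum_(G in SB s t H1 H2 u v) (Nb H1 H2 u v G + a * b * Kb))).
  rewrite -sum_nat_const; apply: leq_sum => G /setIdP [GO uvG].
  have [hu hv _ _] := OmP GO.
  have := B_bound H1 H2 hu hv uvG.
  by rewrite (degXU _ GO) (degXV _ GO) (cardX GO) /Kb /Ds /Dt /DH /J1 /J2.
rewrite big_split /= sum_nat_const -sumNf leq_add2r.
rewrite -sum_nat_const; apply: leq_sum => G /setIdP [GO _].
have := F_upper H1 H2 u v G.
by rewrite (cardX GO).
Qed.

Let X := Jd s t + Delta_d s t * (1 + Delta_H H2) + a * b.
Let Y := #|H2| * maxf s * maxf t.

Lemma boundEf : Ef <= 6 * (m * X + Y).
Proof.
have hs : Ds <= Delta_d s t by apply: leq_maxl.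
have ht : Dt <= Delta_d s t by apply: leq_maxr.
have h1 : Ds * DH <= Delta_d s t * DH by apply: leq_mul.
have h2 : Dt * DH <= Delta_d s t * DH by apply: leq_mul.
have hK : KP + KQ <= 6 * X.
  rewrite /KP /KQ /X /Jd -/J1 -/J2 -/DH; lia.
have : m * (KP + KQ) <= m * (6 * X) by apply: leq_mul.
rewrite /Ef /Y -/Ds -/Dt; lia.
Qed.

Lemma boundKb : Kb <= 4 * X.
Proof.
have hs : Ds <= Delta_d s t by apply: leq_maxl.
have ht : Dt <= Delta_d s t by apply: leq_maxr.
have h1 : Ds * DH <= Delta_d s t * DH by apply: leq_mul.
have h2 : Dt * DH <= Delta_d s t * DH by apply: leq_mul.
rewrite /Kb /X /Jd -/J1 -/J2 -/DH; lia.
Qed.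

Lemma final_sec (R : realType) : (#|H1| < Msum s)%N -> (0 < #|Om s t H1 H2|)%N ->
  (xi R s t H1 H2 u v <= 1 / 12)%R ->
  (`| cond_prob R s t H1 H2 u v - main_term R s t H1 u v |
      <= 12 * xi R s t H1 H2 u v * main_term R s t H1 u v)%R.
Proof.
move=> hm hOm hxi.
have mpos : (0 < m)%N by rewrite /m subn_gt0.
move: hxi; rewrite /cond_prob /main_term /xi.
rewrite [#|cond_space s t H1 H2|](card_split _ (fun G : {set U * V} => (u, v) \in G)).
rewrite natrX expr2 -/m -/X -/Y -/a -/b => hxi.
have := card_split (Om s t H1 H2) (fun G : {set U * V} => (u, v) \in G).
move=> hc.
rewrite natrD; apply: (@final_real R _ _ _ _ Ef%:R Kb%:R) => //.
- by rewrite -natrD ltr0n -hc.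
- by rewrite ltr0n.
- by rewrite -!natrM -natrD ler_nat; exact: ineqI.
- by rewrite -!natrM -natrD ler_nat; exact: ineqII.
- rewrite (_ : (6 : R)%R = (6%:R)%R) // -!natrM -natrD -natrM ler_nat; exact: boundEf.
- rewrite (_ : (4 : R)%R = (4%:R)%R) // -natrM ler_nat; exact: boundKb.
- by rewrite ler_nat /X leq_addl.
Qed.

End Final.

Local Open Scope ring_scope.

Theorem mainTheorem17 (R : realType) :
  exists eps C : R, 0 < eps /\ 0 <= C /\
  forall (U V : finType) (s : U -> nat) (t : V -> nat) (H1 H2 : {set U * V})
         (u : U) (v : V),
    Msum s = (\sum_(w : V) t w)%N ->
    H1 :&: H2 = set0 ->
    (forall x : U, (degU H1 x <= s x)%N) ->
    (forall y : V, (degV H1 y <= t y)%N) ->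
    (u, v) \notin H1 -> (u, v) \notin H2 ->
    (#|H1| < Msum s)%N ->
    (0 < #|cond_space s t H1 H2|)%N ->
    xi R s t H1 H2 u v <= eps ->
    `| cond_prob R s t H1 H2 u v - main_term R s t H1 u v |
      <= C * xi R s t H1 H2 u v * main_term R s t H1 u v.
Proof.
exists (1 / 12), 12; split; first by rewrite mul1r invr_gt0 ltr0n.
split; first by rewrite ler0n.
move=> U V s t H1 H2 u v _ _ _ _ huv1 huv2 hm hOm hxi.
exact: (final_sec huv1 huv2 hm hOm hxi).
Qed.
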